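(* Let $p$ be a prime and let $\Psi\colon\mathbb{Z}_p\times\mathbb{Z}_p\to\operatorname{Aut}\mathbb{Z}_{p^2}$ be a group homomorphism. Then for any $b_1,b_p\in\mathbb{Z}_p\times\mathbb{Z}_p$ there is at most one relative Rota--Baxter operator $B\colon\mathbb{Z}_{p^2}\to\mathbb{Z}_p\times\mathbb{Z}_p$ with respect to $(\mathbb{Z}_p\times\mathbb{Z}_p,\Psi)$ such that $B(1)=b_1$ and $B(p)=b_p$. Moreover, if $p>2$, then every relative Rota--Baxter operator $B\colon\mathbb{Z}_{p^2}\to\mathbb{Z}_p\times\mathbb{Z}_p$ with respect to $(\mathbb{Z}_p\times\mathbb{Z}_p,\Psi)$ is a group homomorphism.
   Context: $\mathbb{Z}_m$ denotes the cyclic group of order $m$, written additively. A relative Rota--Baxter operator on $H$ with respect to $(G,\Psi)$, where $\Psi\colon G\to\operatorname{Aut}H$ is a homomorphism, is a map $B\colon H\to G$ with $B(h)B(k)=B(h\Psi_{B(h)}(k))$ for all $h,k\in H$; here in additive notation: $B(h)+B(k)=B(h+\Psi_{B(h)}(k))$. *)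

(* Defs.v *)
From mathcomp Require Import all_boot all_algebra.
Set Implicit Arguments. Unset Strict Implicit. Unset Printing Implicit Defensive.
Import GRing.Theory.
Local Open Scope ring_scope.

(* Groups are written additively: abelian groups as zmodTypes. *)

Definition is_aut (H : zmodType) (f : H -> H) : Prop :=
  {morph f : x y / x + y} /\ bijective f.

Definition aut_hom (G H : zmodType) (Psi : G -> H -> H) : Prop :=
  (forall g, is_aut (Psi g)) /\
  (forall g g' x, Psi (g + g') x = Psi g (Psi g' x)).

Definition rel_RB (G H : zmodType) (Psi : G -> H -> H) (B : H -> G) : Prop :=
  forall h k, B h + B k = B (h + Psi (B h) k).

Definition grp_hom (H G : zmodType) (B : H -> G) : Prop :=
  {morph B : x y / x + y}.

(* Main.v *)
Require Import Defs.
From mathcomp Require Import all_boot all_algebra.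
From mathcomp Require Import ring.
Import GRing.Theory.
Local Open Scope ring_scope.

Lemma morph0 (H : zmodType) (f : H -> H) : {morph f : x y / x + y} -> f 0 = 0.
Proof. by move=> fD; apply: (@addrI _ (f 0)); rewrite -fD !addr0. Qed.
Lemma morphMn (H : zmodType) (f : H -> H) x n :
  {morph f : x y / x + y} -> f (x *+ n) = f x *+ n.
Proof.
move=> fD; elim: n => [|n IH]; first by rewrite !mulr0n morph0.
by rewrite !mulrS fD IH.
Qed.
Lemma pairMn (p : nat) (g : ('Z_p * 'Z_p)%type) n : g *+ n = (g.1 *+ n, g.2 *+ n).
Proof. elim: n => [|n IH]; first by case: g. by rewrite !mulrS IH. Qed.
Lemma pairMp (p : nat) (pp : prime p) (g : ('Z_p * 'Z_p)%type) : g *+ p = 0.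
Proof.
have h (x : 'Z_p) : x *+ p = 0.
  by rewrite -mulr_natr pchar_Zp ?prime_gt1 // mulr0.
by rewrite pairMn !h.
Qed.
Lemma mulrn_modp (p N : nat) (V : zmodType) (b : V) m :
  b *+ p = 0 -> (p %| N)%N -> b *+ (m %% N) = b *+ m.
Proof.
move=> bp /dvdnP [c ->].
rewrite {2}(divn_eq m (c * p)) mulrnDr.
by rewrite [(_ * (c * p))%N]mulnC (mulnC c p) -mulnA mulrnA bp mul0rn add0r.
Qed.

Theorem theorem4p4 (p : nat) (pp : prime p)
    (Psi : ('Z_p * 'Z_p)%type -> 'Z_(p ^ 2)%N -> 'Z_(p ^ 2)%N) :
  aut_hom Psi ->
  (forall (b1 bp : ('Z_p * 'Z_p)%type) (B1 B2 : 'Z_(p ^ 2)%N -> ('Z_p * 'Z_p)%type),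
      rel_RB Psi B1 -> rel_RB Psi B2 ->
      B1 1 = b1 -> B1 (p%:R) = bp ->
      B2 1 = b1 -> B2 (p%:R) = bp ->
      B1 =1 B2) /\
  ((2 < p)%N -> forall B : 'Z_(p ^ 2)%N -> ('Z_p * 'Z_p)%type,
      rel_RB Psi B -> grp_hom B).
Proof.
move=> [PsiA PsiM].
have p1 := prime_gt1 pp.
have p21 : (1 < p ^ 2)%N by rewrite (ltn_trans p1) // -{1}(expn1 p) ltn_exp2l.
set P : 'Z_(p ^ 2) := p%:R.
have PP : P * P = 0 by rewrite -natrM mulnn pchar_Zp.
have PsiD g : {morph Psi g : x y / x + y} by case: (PsiA g).
have Psi0 g : Psi g 0 = 0 by apply: morph0.
have PsiX g (x : 'Z_(p ^ 2)) : Psi g x = x * Psi g 1.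
  by rewrite -{1}(natr_Zp x) morphMn // -mulr_natr natr_Zp mulrC.
have Psi_id x : Psi 0 x = x.
  case: (PsiA 0) => _ [f fK _].
  by apply: (can_inj fK); rewrite -PsiM addr0.
have PsiU g : exists a, Psi g 1 = 1 + P * a.
  set u := Psi g 1.
  have uX n : Psi (g *+ n) 1 = u ^+ n.
    elim: n => [|n IH]; first by rewrite mulr0n Psi_id expr0.
    by rewrite mulrS PsiM IH PsiX exprSr.
  have up : u ^+ p = 1 by rewrite -uX pairMp // Psi_id.
  have : ((nat_of_ord u) ^ p %% p ^ 2 = 1)%N.
    have ueq : u = (nat_of_ord u)%:R by rewrite natr_Zp.
    have := congr1 (@nat_of_ord _) up; rewrite {1}ueq -natrX val_Zp_nat // => ->.
  move=> /(congr1 (fun m => m %% p)%N).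
  rewrite modn_dvdm ?dvdn_exp // (fermat_little _ pp) (modn_small p1) => um.
  exists (nat_of_ord u %/ p)%:R.
  by rewrite -{1}(natr_Zp u) {1}(divn_eq (nat_of_ord u) p) um natrD natrM addrC mulrC.
have BP0 B : rel_RB Psi B -> B 0 = 0.
  by move=> RB; apply: (@addrI _ (B 0)); rewrite addr0 RB Psi0 addr0.
have PsiP g y : Psi g (P * y) = P * y.
  rewrite PsiX; case: (PsiU g) => a ->.
  by rewrite mulrDr mulr1 mulrCA !mulrA PP !mul0r addr0.
have BmulP B : rel_RB Psi B -> forall j, B (P * j%:R) = B P *+ j.
  move=> RB; elim=> [|j IH]; first by rewrite mulr0 mulr0n BP0.
  by rewrite [(j.+1)%:R]mulrS mulrDr mulr1 -(PsiP (B P)) -RB IH mulrS.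
pose xs (b : ('Z_p * 'Z_p)%type) n := \sum_(i < n) Psi (b *+ i) 1.
have xsS b n : xs b n.+1 = xs b n + Psi (b *+ n) 1 by rewrite /xs big_ord_recr.
have Bx B b : rel_RB Psi B -> B 1 = b -> forall n, B (xs b n) = b *+ n.
  move=> RB B1; elim=> [|n IH]; first by rewrite /xs big_ord0 BP0.
  by have := RB (xs b n) 1; rewrite IH B1 xsS => <-; rewrite mulrSr.
have xsmod b n : exists y, xs b n = n%:R + P * y.
  elim: n => [|n [y IH]]; first by exists 0; rewrite /xs big_ord0 mulr0 addr0.
  case: (PsiU (b *+ n)) => a Ha; exists (y + a).
  rewrite xsS IH Ha -natr1; ring.
have decomp b (h : 'Z_(p ^ 2)) : exists j, h = xs b (nat_of_ord h %% p)%N + P * j%:R.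
  case: (xsmod b (nat_of_ord h %% p)%N) => y ->.
  exists (nat_of_ord ((nat_of_ord h %/ p)%N%:R - y : 'Z_(p ^ 2))); rewrite natr_Zp.
  rewrite -{1}(natr_Zp h) {1}(divn_eq (nat_of_ord h) p) natrD natrM -/P; ring.
have Beval B b n j : rel_RB Psi B -> B 1 = b ->
    B (xs b n + P * j%:R) = b *+ n + B P *+ j.
  move=> RB B1.
  by rewrite -(PsiP (B (xs b n)) j%:R) -RB (Bx _ b) // BmulP.
split.
  move=> b1 bp B1 B2 R1 R2 h11 h1p h21 h2p h.
  case: (decomp b1 h) => j ->.
  by rewrite !(Beval _ b1) // h1p h2p.
move=> p2 B RB h k.
set b := B 1.
case: (PsiU b) => a Ha.
have PsiBn i : Psi (b *+ i) 1 = 1 + P * a * i%:R.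
  elim: i => [|i IH]; first by rewrite mulr0n Psi_id mulr0 addr0.
  rewrite mulrS PsiM IH PsiX Ha -natr1.
  have -> : (1 + P * a * i%:R) * (1 + P * a) =
     1 + P * a * (i%:R + 1) + P * P * (a * a * i%:R) by ring.
  by rewrite PP mul0r addr0.
have xsC n : xs b n = n%:R + P * a * ('C(n, 2))%:R.
  elim: n => [|n IH]; first by rewrite /xs big_ord0 bin0n mulr0 addr0.
  rewrite xsS IH PsiBn binS bin1 natrD -natr1; ring.
have BP : B P = 0.
  have /dvdnP [c hc] : (p %| 'C(p, 2))%N by apply: prime_dvd_bin => //; rewrite p2.
  have : xs b p = P.
    rewrite xsC hc natrM -/P.
    have -> : P * a * (c%:R * P) = P * P * (a * c%:R) by ring.
    by rewrite PP mul0r addr0.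
  by move=> <-; rewrite (Bx _ b) // pairMp.
have Bh (x : 'Z_(p ^ 2)) : B x = b *+ nat_of_ord x.
  case: (decomp b x) => j hx.
  rewrite {1}hx (Beval _ b) // BP mul0rn addr0 (@mulrn_modp p p) ?dvdnn //.
  exact: pairMp.
rewrite !Bh -mulrnDr.
have -> : h + k = (nat_of_ord h + nat_of_ord k)%N%:R by rewrite natrD !natr_Zp.
rewrite val_Zp_nat // (@mulrn_modp p) ?dvdn_exp //.
exact: pairMp.
Qed.
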